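(* Let $(\mathsf K,\mathsf D)$ be a differential ring, $a_1\in\mathsf K$, $\nabla:=\mathsf D+a_1\in\mathsf K\langle\mathsf D\rangle$, and $u\in\mathsf K$. For every $m\ge0$, $$(\nabla+u)^m=\sum_{j=0}^m\binom mj Q_{m-j}(u)\,\nabla^j$$ in $\mathsf K\langle\mathsf D\rangle$.
   Context: $(\mathsf K,\mathsf D)$: unital associative (possibly noncommutative) ring with derivation; $\mathsf K\langle\mathsf D\rangle$: Ore algebra with $\mathsf D a=a\mathsf D+\mathsf D(a)$. Define the derivation $\Delta_{a_1}(b):=\mathsf D(b)+a_1b-ba_1$ on $\mathsf K$. The covariant Bell polynomials are $Q_0(u)=1$, $Q_{m+1}(u)=\Delta_{a_1}(Q_m(u))+u\,Q_m(u)$. *)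

(* Defs.v *)
From mathcomp Require Import all_boot all_algebra.
Set Implicit Arguments. Unset Strict Implicit. Unset Printing Implicit Defensive.
Import GRing.Theory.
Local Open Scope ring_scope.

(* The Ore algebra K<D> over a ring K with derivation D.
   Its elements are represented by their (unique) normal form
   sum_i p_i D^i, stored as the coefficient sequence of a {poly K}
   (coefficients on the LEFT of the powers of D).  Only the additive
   structure of {poly K} is used; the multiplication of K<D> is
   [ore_mul] below, encoding the rule  D a = a D + D(a). *)

Section Ore.
Variable K : nzRingType.
Variable D : K -> K.

(* left multiplication by the generator D:
   D * (sum b_i D^i) = sum (b_i D^(i+1) + D(b_i) D^i) *)
Definition ore_lmulD (q : {poly K}) : {poly K} := 'X * q + map_poly D q.

Definition ore_mul (p q : {poly K}) : {poly K} :=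
  \sum_(i < size p) (p`_i)%:P * iter i ore_lmulD q.

Definition ore_pow (p : {poly K}) (m : nat) : {poly K} :=
  iter m (ore_mul p) 1.

Definition Delta (a1 b : K) : K := D b + a1 * b - b * a1.

Fixpoint covQ (a1 : K) (m : nat) (u : K) : K :=
  match m with
  | 0 => 1
  | m'.+1 => Delta a1 (covQ a1 m' u) + u * covQ a1 m' u
  end.
End Ore.

(* Main.v *)
Require Import Defs.
From mathcomp Require Import all_boot all_algebra.
Import GRing.Theory.
Local Open Scope ring_scope.

Section Aux.
Variable K : nzRingType.
Variable D : K -> K.
Hypothesis D_add : forall a b : K, D (a + b) = D a + D b.
Hypothesis D_mul : forall a b : K, D (a * b) = D a * b + a * D b.

Lemma D0 : D 0 = 0.
Proof. by have := D_add 0 0; rewrite addr0 => /eqP; rewrite -subr_eq subrr eq_sym => /eqP. Qed.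

Local Notation L := (ore_lmulD D).

Lemma coefL (q : {poly K}) i : (L q)`_i = (if i == 0%N then 0 else q`_i.-1) + D q`_i.
Proof. by rewrite /ore_lmulD coefD coefXM coef_map_id0 // D0. Qed.

Lemma L_add p q : L (p + q) = L p + L q.
Proof.
apply/polyP=> i; rewrite coefD !coefL !coefD D_add.
case: (i == 0%N); rewrite ?addr0 ?add0r.
  by rewrite addrC.
by rewrite -!addrA; congr (_ + _); rewrite addrCA.
Qed.

Lemma L_C c q : L (c%:P * q) = c%:P * L q + (D c)%:P * q.
Proof.
apply/polyP=> i; rewrite coefL [RHS]coefD !coefCM coefL D_mul mulrDr.
case: (i == 0%N); rewrite ?mulr0 ?add0r; first by rewrite addrC.
by rewrite [D c * _ + _]addrC addrA.
Qed.

Lemma ore_mulC c q : ore_mul D c%:P q = c%:P * q.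
Proof.
rewrite /ore_mul size_polyC; case: eqP => [->|_].
  by rewrite big_ord0 mul0r.
by rewrite big_ord1 coefC.
Qed.

Lemma ore_mulX c q : ore_mul D ('X + c%:P) q = L q + c%:P * q.
Proof.
rewrite /ore_mul size_XaddC !big_ord_recr big_ord0 /= add0r.
by rewrite !coefD !coefX !coefC /= add0r addr0 mul1r addrC.
Qed.

Definition Nop (a : K) (q : {poly K}) := L q + a%:P * q.

Lemma Nop_add a p q : Nop a (p + q) = Nop a p + Nop a q.
Proof.
by rewrite /Nop L_add mulrDr addrACA.
Qed.

Lemma Nop0 a : Nop a 0 = 0.
Proof.
by have := Nop_add a 0 0; rewrite addr0 => /eqP; rewrite -subr_eq subrr eq_sym => /eqP.
Qed.

Lemma Nop_muln a p n : Nop a (p *+ n) = Nop a p *+ n.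
Proof. by elim: n => [|n IH]; rewrite ?mulr0n ?Nop0 // !mulrS Nop_add IH. Qed.

Lemma Nop_sum a n (F : 'I_n -> {poly K}) : Nop a (\sum_(i < n) F i) = \sum_(i < n) Nop a (F i).
Proof. exact: (big_morph _ (Nop_add a) (Nop0 a)). Qed.

Lemma Nop_C a c q : Nop a (c%:P * q) = c%:P * Nop a q + (Delta D a c)%:P * q.
Proof.
rewrite /Nop L_C; move: (L q) => Lq.
rewrite /Delta !polyCD polyCN !mulrDl mulNr mulrDr !mulrA -!polyCM.
rewrite -!addrA; congr (_ + _).
by rewrite [RHS]addrCA [_ + (_ - _)]addrC subrK.
Qed.

Lemma Nop_addC a b q : Nop (a + b) q = Nop a q + b%:P * q.
Proof. by rewrite /Nop; move: (L q) => Lq; rewrite polyCD mulrDl addrA. Qed.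

Lemma main_aux (a1 u : K) (m : nat) :
  let nabla : {poly K} := 'X + a1%:P in
  ore_pow D (nabla + u%:P) m =
  \sum_(j < m.+1)
     ore_mul D (covQ D a1 (m - j) u)%:P (ore_pow D nabla j) *+ 'C(m, j).
Proof.
move=> nabla.
have hM : forall q, ore_mul D (nabla + u%:P) q = Nop (a1 + u) q.
  by move=> q; rewrite /nabla -addrA -polyCD ore_mulX.
have hN : forall j, ore_pow D nabla j.+1 = Nop a1 (ore_pow D nabla j).
  by move=> j; rewrite /ore_pow iterS -/(ore_pow D nabla j) ore_mulX.
have hMC : forall c q, Nop (a1 + u) (c%:P * q) =
    c%:P * Nop a1 q + (Delta D a1 c + u * c)%:P * q.
  move=> c q; rewrite Nop_addC Nop_C.
  by rewrite mulrA -polyCM -addrA -mulrDl -polyCD.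
under eq_bigr do rewrite ore_mulC.
elim: m => [|m IH].
  by rewrite big_ord1 /= bin0 mulr1n mul1r.
have -> : ore_pow D (nabla + u%:P) m.+1 = Nop (a1 + u) (ore_pow D (nabla + u%:P) m).
  by rewrite -hM.
rewrite IH Nop_sum.
have -> : \sum_(i < m.+1) Nop (a1+u) ((covQ D a1 (m-i) u)%:P * ore_pow D nabla i *+ 'C(m,i))
  = \sum_(i<m.+1) (covQ D a1 (m-i) u)%:P * ore_pow D nabla i.+1 *+ 'C(m,i)
        + \sum_(i<m.+1) (covQ D a1 (m.+1-i) u)%:P * ore_pow D nabla i *+ 'C(m,i).
  rewrite -big_split; apply: eq_bigr => i _.
  by rewrite Nop_muln hMC -hN (@subSn i m (ltn_ord i)) mulrnDl.
set c := fun k => (covQ D a1 k u)%:P.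
set v := fun k => ore_pow D nabla k.
change (\sum_(i < m.+1) c (m - i)%N * v i.+1 *+ 'C(m, i) +
  \sum_(i < m.+1) c (m.+1 - i)%N * v i *+ 'C(m, i) =
  \sum_(j < m.+2) c (m.+1 - j)%N * v j *+ 'C(m.+1, j)).
rewrite [RHS]big_ord_recl.
have -> : \sum_(i < m.+1) c (m.+1 - lift ord0 i)%N * v (lift ord0 i) *+ 'C(m.+1, lift ord0 i)
  = \sum_(i < m.+1) c (m - i)%N * v i.+1 *+ 'C(m, i) + \sum_(i < m.+1) c (m - i)%N * v i.+1 *+ 'C(m, i.+1).
  rewrite -big_split; apply: eq_bigr => i _.
  by rewrite lift0 subSS binS mulrnDr addrC.
rewrite addrCA; congr (_ + _).
rewrite [LHS]big_ord_recl [X in _ = _ + X]big_ord_recr /=.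
rewrite (@bin_small m m.+1) // mulr0n addr0 !bin0; congr (_ + _).
Qed.

End Aux.

Theorem mainTheorem5 (K : nzRingType) (D : K -> K)
  (D_add : forall a b : K, D (a + b) = D a + D b)
  (D_mul : forall a b : K, D (a * b) = D a * b + a * D b)
  (a1 u : K) (m : nat) :
  let nabla : {poly K} := 'X + a1%:P in
  ore_pow D (nabla + u%:P) m =
  \sum_(j < m.+1)
     ore_mul D (covQ D a1 (m - j) u)%:P (ore_pow D nabla j) *+ 'C(m, j).
Proof. exact: main_aux. Qed.
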